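(* Let $\mathcal{A},\mathcal{B}$ be symmetric real $m$-th order $n$-dimensional tensors ($n=n_1+\cdots+n_r$) with $\mathcal{A}$ strictly $\mathcal{K}$-positive, i.e. $\mathcal{A}x^m>0$ for all $x\in\mathcal{K}\setminus\{0\}$. Let $\bar x$ be a stationary point of the problem $$\max\ \lambda(x):=\frac{\mathcal{B}x^m}{\mathcal{A}x^m}\quad\text{s.t.}\quad (x^i_\circ)^2-\|x^i_\bullet\|^2\ge 0,\ x^i_\circ\ge 0\ (i=1,\ldots,r),\quad e^\top x=1.$$ Then $(\bar x,\lambda(\bar x))$ is a solution of the second-order cone tensor eigenvalue complementarity problem, i.e. $\bar x\neq0$, $\bar x\in\mathcal{K}$, $\bar w:=(\lambda(\bar x)\mathcal{A}-\mathcal{B})\bar x^{m-1}\in\mathcal{K}$ and $\langle\bar x,\bar w\rangle=0$.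
   Context: A real $m$-th order $n$-dimensional tensor is an array $\mathcal{A}=(a_{i_1\ldots i_m})$; it is symmetric if its entries are invariant under any permutation of the indices. For $x\in\mathbb{R}^n$, $\mathcal{A}x^{m-1}\in\mathbb{R}^n$ has $i$-th component $\sum_{i_2,\ldots,i_m} a_{ii_2\ldots i_m}x_{i_2}\cdots x_{i_m}$ and $\mathcal{A}x^m=\sum_{i_1,\ldots,i_m} a_{i_1\ldots i_m}x_{i_1}\cdots x_{i_m}$. Vectors are written $x=(x^1,\ldots,x^r)\in\mathbb{R}^{n_1}\times\cdots\times\mathbb{R}^{n_r}$ with $x^i=(x^i_\circ,x^i_\bullet)\in\mathbb{R}\times\mathbb{R}^{n_i-1}$. $\mathcal{K}=\mathcal{K}^{n_1}\times\cdots\times\mathcal{K}^{n_r}$ with $\mathcal{K}^{n_i}=\{x^i: x^i_\circ\ge\|x^i_\bullet\|\}$. $e=(e^1,\ldots,e^r)$ with $e^i=(1,0,\ldots,0)^\top\in\mathbb{R}^{n_i}$. A stationary point of the maximization problem is a feasible point $\bar x$ satisfying the KKT conditions: there exist $\beta,\gamma\in\mathbb{R}^r_+$ and $\delta\in\mathbb{R}$ with $\nabla\lambda(\bar x)+\sum_i\beta_i\nabla g_i(\bar x)+\sum_i\gamma_i\nabla h_i(\bar x)+\delta e=0$, $\beta_i g_i(\bar x)=0$, $\gamma_i h_i(\bar x)=0$, where $g_i(x)=(x^i_\circ)^2-\|x^i_\bullet\|^2$ and $h_i(x)=x^i_\circ$. *)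

(* Defs.v *)
From HB Require Import structures.
From mathcomp Require Import all_boot all_order all_algebra all_fingroup.
From mathcomp Require Import all_classical all_reals all_analysis.
Set Implicit Arguments. Unset Strict Implicit. Unset Printing Implicit Defensive.
Import Order.TTheory GRing.Theory Num.Theory.
Local Open Scope ring_scope.

Section Defs.
Variable R : realType.
Variables (r : nat) (nn : 'I_r -> nat).

(* Coordinate index set of R^{n_1} x ... x R^{n_r}: pairs (block i, position j < n_i).
   Position 0 of block i is x^i_o, the others form x^i_bullet. *)
Definition Idx := {i : 'I_r & 'I_(nn i)}.

Definition vec := Idx -> R.

Definition tensor (m : nat) := {ffun 'I_m -> Idx} -> R.

Definition symmetric_tensor m (A : tensor m) : Prop :=
  forall (s : 'S_m) (idx : {ffun 'I_m -> Idx}), A [ffun k => idx (s k)] = A idx.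

Definition tens_m m (A : tensor m) (x : vec) : R :=
  \sum_(idx : {ffun 'I_m -> Idx}) A idx * \prod_(k : 'I_m) x (idx k).

Definition tens_m1 m (A : tensor m) (x : vec) : vec := fun i =>
  \sum_(idx : {ffun 'I_m -> Idx} | [forall k : 'I_m, (val k == 0%N) ==> (idx k == i)])
     A idx * \prod_(k : 'I_m | val k != 0%N) x (idx k).

(* x^i_o (the unique coordinate of block i with position 0, when n_i >= 1) *)
Definition xcirc (x : vec) (i : 'I_r) : R :=
  \sum_(j : 'I_(nn i) | val j == 0%N) x (Tagged (fun i => 'I_(nn i)) j).

Definition xbullet2 (x : vec) (i : 'I_r) : R :=
  \sum_(j : 'I_(nn i) | val j != 0%N) (x (Tagged (fun i => 'I_(nn i)) j)) ^+ 2.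

Definition inK (x : vec) : Prop := forall i, Num.sqrt (xbullet2 x i) <= xcirc x i.

Definition evec : vec := fun k => (val (tagged k) == 0%N)%:R.

Definition inner (x y : vec) : R := \sum_k x k * y k.

Definition zero_vec : vec := fun _ => 0.

Definition grad (f : vec -> R) (x : vec) : vec := fun k =>
  derive1 (fun t : R => f (fun l => x l + t * (l == k)%:R)) 0.

Definition lam m (A B : tensor m) (x : vec) : R := tens_m B x / tens_m A x.

Definition gcon (i : 'I_r) (x : vec) : R := xcirc x i ^+ 2 - xbullet2 x i.
Definition hcon (i : 'I_r) (x : vec) : R := xcirc x i.

Definition feasible (x : vec) : Prop :=
  (forall i, 0 <= gcon i x) /\ (forall i, 0 <= hcon i x) /\ inner evec x = 1.

Definition stationary m (A B : tensor m) (x : vec) : Prop :=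
  feasible x /\
  exists (beta gamma : 'I_r -> R) (delta : R),
    (forall i, 0 <= beta i) /\ (forall i, 0 <= gamma i) /\
    (forall k, grad (lam A B) x k + \sum_i beta i * grad (gcon i) x k
               + \sum_i gamma i * grad (hcon i) x k + delta * evec k = 0) /\
    (forall i, beta i * gcon i x = 0) /\ (forall i, gamma i * hcon i x = 0).

Definition strictly_K_positive m (A : tensor m) : Prop :=
  forall x, inK x -> x <> zero_vec -> 0 < tens_m A x.

End Defs.

(* Main.v *)
Require Import Defs.
From mathcomp Require Import all_boot all_order all_algebra all_fingroup.
From mathcomp Require Import all_classical all_reals all_analysis.
Import Order.TTheory GRing.Theory Num.Theory.
Local Open Scope ring_scope.
Set Implicit Arguments.
Unset Strict Implicit.
Section S.
Variable R : realType.

Lemma is_derive_ext (g f : R -> R) x v df : f = g -> is_derive x v g df -> is_derive x v f df.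
Proof. by move=> ->. Qed.
Arguments is_derive_ext g {f x v df}.

Lemma is_derive_bsum (I : Type) (s : seq I) (F : I -> R -> R) (dF : I -> R) (x : R) :
  (forall i, is_derive x 1 (F i) (dF i)) ->
  is_derive x 1 (fun t => \sum_(i <- s) F i t) (\sum_(i <- s) dF i).
Proof.
move=> H; elim: s => [|a s IH].
  apply: (is_derive_ext (cst 0)); first by apply/funext => t; rewrite big_nil.
  by rewrite big_nil; exact: is_derive_cst.
apply: (is_derive_ext (F a + (fun t => \sum_(i <- s) F i t))).
  by apply/funext => t; rewrite big_cons.
rewrite big_cons; exact: is_deriveD.
Qed.

Lemma is_derive_bprod (I : eqType) (s : seq I) (F : I -> R -> R) (dF : I -> R) (x : R) :
  uniq s ->
  (forall i, is_derive x 1 (F i) (dF i)) ->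
  is_derive x 1 (fun t => \prod_(i <- s) F i t)
    (\sum_(j <- s) dF j * \prod_(l <- s | l != j) F l x).
Proof.
move=> + H; elim: s => [|a s IH].
  move=> _; apply: (is_derive_ext (cst 1)); first by apply/funext => t; rewrite big_nil.
  by rewrite big_nil; exact: is_derive_cst.
move=> /= /andP[aNs us].
apply: (is_derive_ext (F a * (fun t => \prod_(i <- s) F i t))).
  by apply/funext => t; rewrite big_cons.
apply: is_derive_eq; first exact: is_deriveM (H a) (IH us).
rewrite big_cons /= big_cons eqxx /=.
have sc : forall u w : R, u *: w = u * w by [].
rewrite !sc addrC; congr (_ + _).
  rewrite mulrC; congr (_ * _); rewrite -[RHS]big_filter (_ : seq.filter _ s = s) //.
  by apply/all_filterP/allP => l ls; apply: contraNneq aNs => <-.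
rewrite big_distrr /=; apply: eq_big_seq => j js.
rewrite big_cons ifT; first by rewrite mulrCA.
by apply: contraNneq aNs => ->.
Qed.
End S.

Arguments is_derive_ext {R} g {f x v df}.
Section T.
Variables (R : realType) (r : nat) (nn : 'I_r -> nat).
Local Notation V := (vec R nn).

Definition shv (x : V) k (t : R) : V := fun l => x l + t * (l == k)%:R.

Lemma shv0 x k : shv x k 0 = x.
Proof. by apply/funext => l; rewrite /shv mul0r addr0. Qed.

Lemma is_derive_lin (c d : R) : is_derive (0:R) 1 (fun t => c + t * d) d.
Proof.
have H1 := @is_derive_cst R R R c 0 1.
have H2 : is_derive (0:R) (1:R) (fun t : R => t * d) d.
  have := is_deriveM (@is_derive_id R R 0 1) (@is_derive_cst R R R d 0 1).
  by rewrite /GRing.scale /= mulr0 mulr1 add0r.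
have := is_deriveD H1 H2; rewrite add0r.
by apply: is_derive_ext; apply/funext.
Qed.

Lemma is_derive_cstM (c : R) g dg : is_derive (0:R) 1 g dg -> is_derive (0:R) 1 (fun t => c * g t) (c * dg).
Proof.
move=> H; have := is_deriveM (@is_derive_cst R R R c 0 1) H.
rewrite /GRing.scale /= mulr0 addr0.
by apply: is_derive_ext; apply/funext.
Qed.

Lemma der_tens m (T : tensor R nn m) x k :
  is_derive (0:R) 1 (fun t => tens_m T (shv x k t))
   (\sum_idx T idx * \sum_(j : 'I_m) ((idx j == k)%:R * \prod_(l | l != j) x (idx l))).
Proof.
rewrite /tens_m; apply: is_derive_bsum => idx.
apply: is_derive_cstM.
apply: is_derive_eq.
  apply: (@is_derive_bprod R _ _ (fun l t => x (idx l) + t * (idx l == k)%:R) (fun l => (idx l == k)%:R)).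
    exact: index_enum_uniq.
  by move=> l; exact: is_derive_lin.
by apply: eq_bigr => j _; rewrite /shv; congr (_ * _); apply: eq_bigr => l _; rewrite mul0r addr0.
Qed.

Lemma sym_reduce m (T : tensor R nn m) (z j : 'I_m) x k :
  symmetric_tensor T ->
  \sum_idx T idx * ((idx j == k)%:R * \prod_(l | l != j) x (idx l)) =
  \sum_idx T idx * ((idx z == k)%:R * \prod_(l | l != z) x (idx l)).
Proof.
move=> sT; pose s : 'S_m := tperm j z.
pose phi (idx : {ffun 'I_m -> Idx nn}) := [ffun l => idx (s l)].
have phiK : involutive phi.
  by move=> idx; apply/ffunP => l; rewrite !ffunE tpermK.
rewrite (reindex_inj (inv_inj phiK)) /=; apply: eq_bigr => idx _.
rewrite /phi sT ffunE tpermL; congr (_ * (_ * _)).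
rewrite [RHS](reindex_inj (@perm_inj _ s)) /=.
apply: eq_big => l; last by rewrite ffunE.
by rewrite -{1}(tpermL j z) (inj_eq (@perm_inj _ s)).
Qed.

Lemma tens_m1E m (T : tensor R nn m) (z : 'I_m) x k : val z = 0%N ->
  tens_m1 T x k = \sum_idx T idx * ((idx z == k)%:R * \prod_(l | l != z) x (idx l)).
Proof.
move=> z0; rewrite /tens_m1 big_mkcond /=; apply: eq_bigr => idx _.
have -> : [forall k0 : 'I_m, (val k0 == 0%N) ==> (idx k0 == k)] = (idx z == k).
  apply/forallP/idP => [/(_ z)|]; first by rewrite z0 eqxx.
  by move=> H l; apply/implyP => /eqP l0; have -> : l = z by apply/val_inj; rewrite /= l0 z0.
have -> : \prod_(k0 | val k0 != 0%N) x (idx k0) = \prod_(l | l != z) x (idx l).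
  by apply: eq_bigl => l; rewrite -z0 (inj_eq val_inj).
by case: (idx z == k); rewrite ?mul1r ?mul0r ?mulr0.
Qed.

Lemma der_tens_sym m (T : tensor R nn m) x k : (0 < m)%N -> symmetric_tensor T ->
  is_derive (0:R) 1 (fun t => tens_m T (shv x k t)) (m%:R * tens_m1 T x k).
Proof.
move=> hm sT; apply: is_derive_eq; first exact: der_tens.
pose z := Ordinal hm.
under eq_bigr do rewrite big_distrr /=.
rewrite exchange_big /=.
under eq_bigr do rewrite (@sym_reduce _ T z) // -(@tens_m1E _ T z x k erefl).
by rewrite sumr_const card_ord mulr_natl.
Qed.
End T.
From mathcomp Require Import ring lra.
Section U.
Variables (R : realType) (r : nat) (nn : 'I_r -> nat).
Local Notation V := (vec R nn).
Local Notation Tg := (Tagged (fun i : 'I_r => 'I_(nn i))).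

Lemma gradE (f : V -> R) x k d : is_derive (0:R) 1 (fun t => f (shv x k t)) d -> grad f x k = d.
Proof. by move=> H; rewrite /grad derive1E; apply: derive_val. Qed.

Lemma is_derive_bsumP (I : Type) (s : seq I) (P : pred I) (F : I -> R -> R) (dF : I -> R) :
  (forall i, P i -> is_derive (0:R) 1 (F i) (dF i)) ->
  is_derive (0:R) 1 (fun t => \sum_(i <- s | P i) F i t) (\sum_(i <- s | P i) dF i).
Proof.
move=> H; elim: s => [|a s IH].
  apply: (is_derive_ext (cst 0)); first by apply/funext => t; rewrite big_nil.
  by rewrite big_nil; exact: is_derive_cst.
case Pa: (P a).
  apply: (is_derive_ext (F a + (fun t => \sum_(i <- s | P i) F i t))).
    by apply/funext => t; rewrite big_cons Pa.
  rewrite big_cons Pa; exact: is_deriveD (H a Pa) IH.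
apply: (is_derive_ext (fun t => \sum_(i <- s | P i) F i t)).
  by apply/funext => t; rewrite big_cons Pa.
by rewrite big_cons Pa.
Qed.

Lemma is_derive_sq (c0 c : R) : is_derive (0:R) 1 (fun t => (c0 + t * c) ^+ 2) (2 * c0 * c).
Proof.
have sc : forall u w : R, u *: w = u * w by [].
have := is_deriveX 2 (is_derive_lin c0 c).
rewrite mul0r addr0 expr1 sc.
by apply: is_derive_ext; rewrite exprfctE.
Qed.

Definition dxc (i : 'I_r) (k : Idx nn) : R := \sum_(j : 'I_(nn i) | val j == 0%N) (Tg j == k)%:R.
Definition dxb (x : V) (i : 'I_r) (k : Idx nn) : R :=
  \sum_(j : 'I_(nn i) | val j != 0%N) 2 * x (Tg j) * (Tg j == k)%:R.

Lemma der_xcirc x k i : is_derive (0:R) 1 (fun t => xcirc (shv x k t) i) (dxc i k).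
Proof.
rewrite /xcirc /dxc.
apply: (is_derive_ext (fun t => \sum_(j : 'I_(nn i) | val j == 0%N) (x (Tg j) + t * (Tg j == k)%:R))) => //.
by apply: is_derive_bsumP => j _; exact: is_derive_lin.
Qed.

Lemma der_xbullet2 x k i : is_derive (0:R) 1 (fun t => xbullet2 (shv x k t) i) (dxb x i k).
Proof.
rewrite /xbullet2 /dxb.
apply: (is_derive_ext (fun t => \sum_(j : 'I_(nn i) | val j != 0%N) (x (Tg j) + t * (Tg j == k)%:R) ^+ 2)) => //.
by apply: is_derive_bsumP => j _; exact: is_derive_sq.
Qed.

Lemma grad_hcon x k i : grad (hcon i) x k = dxc i k.
Proof. apply: gradE; exact: der_xcirc. Qed.

Lemma grad_gcon x k i : grad (gcon i) x k = 2 * xcirc x i * dxc i k - dxb x i k.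
Proof.
apply: gradE; rewrite /gcon.
have H1 := der_xcirc x k i.
have H := is_deriveB (is_deriveM H1 H1) (der_xbullet2 x k i).
have sc : forall u w : R, u *: w = u * w by [].
apply: is_derive_eq.
rewrite /= shv0 !sc; ring.
Qed.
End U.
Arguments dxc {R r nn}.
Section W.
Variables (R : realType) (r : nat) (nn : 'I_r -> nat).
Local Notation V := (vec R nn).
Local Notation Tg := (Tagged (fun i : 'I_r => 'I_(nn i))).

Lemma der_lam m (A B : tensor R nn m) x k : (0 < m)%N -> symmetric_tensor A -> symmetric_tensor B ->
  tens_m A x != 0 ->
  is_derive (0:R) 1 (fun t => lam A B (shv x k t))
    (- (m%:R / tens_m A x) * ((tens_m B x / tens_m A x) * tens_m1 A x k - tens_m1 B x k)).
Proof.
move=> hm sA sB a0.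
have HA := der_tens_sym x k hm sA; have HB := der_tens_sym x k hm sB.
have sc : forall u w : R, u *: w = u * w by [].
pose fA := fun t => tens_m A (shv x k t).
have fA0 : fA 0 = tens_m A x by rewrite /fA shv0.
have HV : is_derive (0:R) 1 (fun t => (fA t)^-1) (- (fA 0) ^- 2 *: (m%:R * tens_m1 A x k)).
  apply: DeriveDef; first (apply: derivableV; [by rewrite fA0 | exact: (@ex_derive _ _ _ _ _ _ _ HA)]).
  by rewrite deriveV ?fA0 // ?(@derive_val _ _ _ _ _ _ _ HA) //; exact: (@ex_derive _ _ _ _ _ _ _ HA).
have := is_deriveM HB HV.
rewrite /= fA0 shv0 !sc => H.
apply: is_derive_eq.
by field.
Qed.

Lemma euler m (T : tensor R nn m) x : (0 < m)%N ->
  \sum_k x k * tens_m1 T x k = tens_m T x.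
Proof.
move=> hm; pose z := Ordinal hm.
under eq_bigr do rewrite (@tens_m1E _ _ _ _ T z) // big_distrr /=.
rewrite exchange_big /tens_m; apply: eq_bigr => idx _.
rewrite (bigD1 (idx z)) //= eqxx [X in _ + X]big1 ?addr0; last first.
  by move=> k; rewrite eq_sym => /negbTE ->; rewrite mul0r !mulr0.
by rewrite [X in _ = _ * X](bigD1 z) //= mul1r mulrCA.
Qed.

Lemma sum_Idx (F : Idx nn -> R) :
  \sum_k F k = \sum_(i : 'I_r) \sum_(j : 'I_(nn i)) F (Tg j).
Proof.
symmetry; rewrite sig_big_dep /=.
by apply: eq_bigr => -[i j].
Qed.

Lemma sel_sum n (P : pred 'I_n) (c : 'I_n -> R) j :
  \sum_(j' | P j') (j' == j)%:R * c j' = (P j)%:R * c j.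
Proof.
rewrite big_mkcond (bigD1 j) //= eqxx mul1r big1 ?addr0; last first.
  by move=> j' /negbTE ->; rewrite mul0r if_same.
by case: (P j); rewrite ?mul1r ?mul0r.
Qed.

Lemma dxc_same i (j : 'I_(nn i)) : dxc i (Tg j) = (val j == 0%N)%:R :> R.
Proof.
rewrite /dxc; under eq_bigr do rewrite eq_Tagged /= -[(_ == _)%:R]mulr1.
by rewrite (sel_sum (fun j' : 'I_(nn i) => val j' == 0%N) (fun _ => 1)) mulr1.
Qed.

Lemma dxc_diff i i' (j : 'I_(nn i)) : i' != i -> dxc i' (Tg j) = 0 :> R.
Proof.
move=> ne; rewrite /dxc big1 // => j' _.
case: eqP => // /(congr1 tag) /= e; by rewrite e eqxx in ne.
Qed.

Lemma dxb_same (x : V) i (j : 'I_(nn i)) : dxb x i (Tg j) = (val j != 0%N)%:R * (2 * x (Tg j)).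
Proof.
rewrite /dxb; under eq_bigr do rewrite eq_Tagged /= mulrC.
by rewrite (sel_sum (fun j' : 'I_(nn i) => val j' != 0%N) (fun j' => 2 * x (Tg j'))).
Qed.

Lemma dxb_diff (x : V) i i' (j : 'I_(nn i)) : i' != i -> dxb x i' (Tg j) = 0.
Proof.
move=> ne; rewrite /dxb big1 // => j' _.
case: eqP => [/(congr1 tag) /= e|]; last by rewrite mulr0.
by rewrite e eqxx in ne.
Qed.
End W.
Unset Implicit Arguments. Set Strict Implicit.
Theorem theorem2 (R : realType) (r : nat) (nn : 'I_r -> nat) (m : nat)
  (A B : tensor R nn m) (xb : vec R nn) :
  (0 < m)%N ->
  (forall i, (0 < nn i)%N) ->
  symmetric_tensor A -> symmetric_tensor B ->
  strictly_K_positive A ->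
  stationary A B xb ->
  let wb : vec R nn := fun k => lam A B xb * tens_m1 A xb k - tens_m1 B xb k in
  xb <> (fun _ => 0) /\ inK xb /\ inK wb /\ inner xb wb = 0.
Proof.
move=> hm hn sA sB Kpos [[hgc [hhc he]] [beta [gamma [delta [hb [hg [hK [cb cg]]]]]]]] wb.
pose Tg := Tagged (fun i : 'I_r => 'I_(nn i)).
have xb0 : xb <> (fun _ => 0).
  move=> e; move: he; rewrite e /inner big1 => [/esym/eqP|k _]; [by rewrite oner_eq0 | by rewrite mulr0].
have Kx : inK xb.
  move=> i; have := hgc i; have := hhc i; rewrite /gcon /hcon => h0 h1.
  rewrite -(ger0_norm h0) -sqrtr_sqr; apply: ler_wsqrtr; by rewrite -subr_ge0.
have a0 : 0 < tens_m A xb by apply: Kpos.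
have mR0 : (m%:R : R) != 0 by rewrite pnatr_eq0 -lt0n.
have inner0 : inner xb wb = 0.
  rewrite /inner /wb; under eq_bigr do rewrite mulrBr mulrCA.
  rewrite sumrB -mulr_sumr !euler // /lam divfK ?subrr //; exact: lt0r_neq0 a0.
pose S k := \sum_i beta i * grad (gcon i) xb k + \sum_i gamma i * grad (hcon i) xb k + delta * evec R k.
have hwS : forall k, wb k = tens_m A xb / m%:R * S k.
  move=> k; have := hK k.
  have -> : grad (lam A B) xb k = - (m%:R / tens_m A xb) * ((tens_m B xb / tens_m A xb) * tens_m1 A xb k - tens_m1 B xb k).
    by apply: gradE; apply: der_lam => //; exact: lt0r_neq0 a0.
  move=> H.
  have H' : S k = (m%:R / tens_m A xb) * wb k.
    apply/eqP; rewrite -subr_eq0; apply/eqP; rewrite -H /S /wb /lam; ring.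
  rewrite H'; field; rewrite mR0 gt_eqF //.
have Scomp : forall i (j : 'I_(nn i)), S (Tg i j) =
    if val j == 0%N then 2 * beta i * xcirc xb i + gamma i + delta else - (2 * beta i * xb (Tg i j)).
  move=> i j.
  have e1 : \sum_i' beta i' * grad (gcon i') xb (Tg i j) =
      beta i * (2 * xcirc xb i * (val j == 0%N)%:R - (val j != 0%N)%:R * (2 * xb (Tg i j))).
    rewrite (bigD1 i) //= [X in _ + X]big1 ?addr0; last first.
      by move=> i' ne; rewrite grad_gcon dxc_diff // dxb_diff // mulr0 subrr mulr0.
    by rewrite grad_gcon dxc_same dxb_same.
  have e2 : \sum_i' gamma i' * grad (hcon i') xb (Tg i j) = gamma i * (val j == 0%N)%:R.
    rewrite (bigD1 i) //= [X in _ + X]big1 ?addr0; last first.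
      by move=> i' ne; rewrite grad_hcon dxc_diff // mulr0.
    by rewrite grad_hcon dxc_same.
  have e3 : evec R (Tg i j) = (val j == 0%N)%:R :> R by [].
  rewrite /S e1 e2 e3.
  by have [j0|j0] := eqVneq (val j) 0%N; rewrite /=; ring.
have hxS : forall i, \sum_(j : 'I_(nn i)) xb (Tg i j) * S (Tg i j) = delta * xcirc xb i.
  move=> i; rewrite (bigID (fun j : 'I_(nn i) => val j == 0%N)) /=.
  under eq_bigr => j hj do rewrite Scomp hj.
  under [X in _ + X]eq_bigr => j hj do rewrite Scomp (negbTE hj).
  rewrite -big_distrl /=.
  have -> : \sum_(j : 'I_(nn i) | val j != 0%N) xb (Tg i j) * - (2 * beta i * xb (Tg i j)) =
      - (2 * beta i) * xbullet2 xb i.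
    by rewrite /xbullet2 mulr_sumr; apply: eq_bigr => j _; ring.
  rewrite -/(xcirc xb i).
  apply/eqP; rewrite -subr_eq0; apply/eqP.
  transitivity (2 * (beta i * gcon i xb) + gamma i * hcon i xb).
    rewrite /gcon /hcon; ring.
  by rewrite cb cg mulr0 addr0.
have he' : inner (evec R (nn:=nn)) xb = \sum_i xcirc xb i.
  rewrite /inner sum_Idx; apply: eq_bigr => i _; rewrite /xcirc [RHS]big_mkcond /=.
  by apply: eq_bigr => j _; rewrite /evec /=; case: (_ == _); rewrite ?mul1r ?mul0r.
have d0 : delta = 0.
  have : inner xb wb = tens_m A xb / m%:R * delta.
    rewrite /inner (eq_bigr (fun k => tens_m A xb / m%:R * (xb k * S k))); last first.
      by move=> k _; rewrite hwS mulrCA.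
    rewrite -mulr_sumr sum_Idx (eq_bigr (fun i => delta * xcirc xb i)); last first.
      by move=> i _; exact: hxS.
    by rewrite -mulr_sumr -he' he mulr1.
  rewrite inner0 => /esym/eqP; rewrite !mulf_eq0 invr_eq0 (gt_eqF a0) (negbTE mR0) /=.
  by move/eqP.
split; first exact: xb0.
split; first exact: Kx.
split; last exact: inner0.
move=> i; pose c := tens_m A xb / m%:R.
have c0 : 0 <= c by rewrite divr_ge0 // ltW.
pose j0 : 'I_(nn i) := Ordinal (hn i).
have P1 : (fun j : 'I_(nn i) => val j == 0%N) =1 pred1 j0 by move=> j; rewrite /= -val_eqE.
have -> : xcirc wb i = c * (2 * beta i * xcirc xb i + gamma i).
  by rewrite {1}/xcirc (big_pred1 j0 P1) hwS Scomp /= d0 addr0.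
have -> : xbullet2 wb i = (2 * c * beta i) ^+ 2 * xbullet2 xb i.
  rewrite /xbullet2 mulr_sumr; apply: eq_bigr => j hj.
  rewrite hwS Scomp (negbTE hj) /c /Tg; ring.
have cb0 : 0 <= 2 * c * beta i by apply: mulr_ge0; [apply: mulr_ge0 => // | exact: hb].
rewrite sqrtrM ?sqr_ge0 // sqrtr_sqr ger0_norm //.
apply: (@le_trans _ _ (2 * c * beta i * xcirc xb i)).
  by rewrite ler_wpM2l // Kx.
rewrite -subr_ge0.
have -> : c * (2 * beta i * xcirc xb i + gamma i) - 2 * c * beta i * xcirc xb i = c * gamma i by ring.
exact: mulr_ge0.
Qed.
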